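(* Every tree (in which every nontrivial pseudo-supremum is a supremum) that is $\mathbb{R}$-special and collectionwise Hausdorff in the interval topology is perfect, i.e. every closed subset is a $G_\delta$.
   Context: A tree is a partially ordered set in which the set of predecessors of each element is well-ordered. For a nonempty chain bounded above, its pseudo-supremum is the set of its minimal upper bounds; standing assumption: each such set is a singleton. A tree $T$ is $\mathbb{R}$-special if there is a function $f\colon T\to\mathbb{R}$ with $p<q\Rightarrow f(p)<f(q)$. The interval topology has as base all sets $(s,t]=\{x:s<x\le t\}$ together with all singletons $\{t\}$ with $t$ minimal. Collectionwise Hausdorff: every closed discrete set $D$ expands to a pairwise disjoint family of open sets $\{U_d:d\in D\}$ with $d\in U_d$. *)

(* Defs.v *)
From Stdlib Require Import Reals.
Open Scope R_scope.

Section Trees.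
Variable T : Type.
Variable le : T -> T -> Prop.

Definition lt (x y : T) : Prop := le x y /\ x <> y.

Definition is_partial_order : Prop :=
  (forall x, le x x) /\
  (forall x y, le x y -> le y x -> x = y) /\
  (forall x y z, le x y -> le y z -> le x z).

Definition preds_well_ordered : Prop :=
  forall (t : T) (S : T -> Prop),
    (forall s, S s -> lt s t) -> (exists s, S s) ->
    exists m, S m /\ forall s, S s -> le m s.

Definition is_tree : Prop := is_partial_order /\ preds_well_ordered.

Definition chain (C : T -> Prop) : Prop :=
  forall x y, C x -> C y -> le x y \/ le y x.

Definition upper_bound (C : T -> Prop) (u : T) : Prop :=
  forall c, C c -> le c u.

(* minimal upper bounds = members of the pseudo-supremum of C *)
Definition minimal_upper_bound (C : T -> Prop) (u : T) : Prop :=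
  upper_bound C u /\ ~ (exists v, upper_bound C v /\ lt v u).

Definition pseudo_sup_singleton : Prop :=
  forall C : T -> Prop, chain C -> (exists c, C c) -> (exists u, upper_bound C u) ->
    exists u, minimal_upper_bound C u /\
      forall v, minimal_upper_bound C v -> v = u.

Definition R_special : Prop :=
  exists f : T -> R, forall p q, lt p q -> f p < f q.

Definition minimal_elt (t : T) : Prop := ~ (exists s, lt s t).

Definition basic_open (B : T -> Prop) : Prop :=
  (exists s t, forall x, B x <-> (lt s x /\ le x t)) \/
  (exists t, minimal_elt t /\ forall x, B x <-> x = t).

Definition is_open (U : T -> Prop) : Prop :=
  forall x, U x -> exists B, basic_open B /\ B x /\ forall y, B y -> U y.

Definition is_closed (F : T -> Prop) : Prop :=
  is_open (fun x => ~ F x).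

Definition closed_discrete (D : T -> Prop) : Prop :=
  is_closed D /\
  forall d, D d -> exists V, is_open V /\ V d /\
    forall y, V y -> D y -> y = d.

Definition collectionwise_Hausdorff : Prop :=
  forall D : T -> Prop, closed_discrete D ->
    exists U : T -> (T -> Prop),
      (forall d, D d -> is_open (U d) /\ U d d) /\
      (forall d d', D d -> D d' -> d <> d' -> forall x, ~ (U d x /\ U d' x)).

Definition G_delta (F : T -> Prop) : Prop :=
  exists G : nat -> (T -> Prop),
    (forall n, is_open (G n)) /\ forall x, F x <-> forall n, G n x.

Definition perfect : Prop :=
  forall F : T -> Prop, is_closed F -> G_delta F.

End Trees.

(* Main.v *)
Require Import Defs.
From Stdlib Require Import Reals.
From Stdlib Require Import Lra Lia ZArith Classical ClassicalEpsilon.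
From Stdlib Require Cantor.

Open Scope R_scope.

Lemma lt_le_trans' (T : Type) (le : T -> T -> Prop) :
  is_partial_order T le -> forall a b c, lt T le a b -> le b c -> lt T le a c.
Proof.
  intros [Hr [Ha Ht]] a b c [Hab Hne] Hbc. split; [eauto|].
  intro E; subst c. apply Hne. apply Ha; auto.
Qed.

Lemma le_lt_trans' (T : Type) (le : T -> T -> Prop) :
  is_partial_order T le -> forall a b c, le a b -> lt T le b c -> lt T le a c.
Proof.
  intros [Hr [Ha Ht]] a b c Hab [Hbc Hne]. split; [eauto|].
  intro E; subst c. apply Hne. apply Ha; auto.
Qed.

Lemma comparable' (T : Type) (le : T -> T -> Prop) :
  is_tree T le -> forall a b x, lt T le a x -> lt T le b x -> le a b \/ le b a.
Proof.
  intros [Hpo Hwo] a b x Ha Hb.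
  destruct (Hwo x (fun s => s = a \/ s = b)) as [m [[E|E] Hm]].
  - intros s [E|E]; subst; auto.
  - exists a; auto.
  - subst m. left. apply Hm; auto.
  - subst m. right. apply Hm; auto.
Qed.

Lemma nbhd_below (T : Type) (le : T -> T -> Prop) :
  is_tree T le -> forall x, exists B, basic_open T le B /\ B x /\ forall y, B y -> le y x.
Proof.
  intros [[Hr [Ha Ht]] Hwo] x.
  destruct (classic (exists s, lt T le s x)) as [[s Hs]|Hn].
  - exists (fun y => lt T le s y /\ le y x). split; [|split].
    + left. exists s, x. intros; tauto.
    + split; auto.
    + intros y [_ H]; auto.
  - exists (fun y => y = x). split; [|split].
    + right. exists x. split; [exact Hn|]. tauto.
    + reflexivity.
    + intros y E; subst; auto.
Qed.

Lemma antichain_cd (T : Type) (le : T -> T -> Prop) :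
  is_tree T le -> forall D : T -> Prop,
  (forall a b, D a -> D b -> le a b -> a = b) -> closed_discrete T le D.
Proof.
  intros Htree D Hanti. split.
  - intros x Hx.
    destruct (classic (exists d, D d /\ lt T le d x)) as [[d [Dd Hdx]]|Hno].
    + exists (fun y => lt T le d y /\ le y x). split; [|split].
      * left. exists d, x. intros; tauto.
      * split; auto. apply Htree.
      * intros y [Hdy _] Dy. destruct Hdy as [Hdy Hne]. apply Hne. apply Hanti; auto.
    + destruct (nbhd_below T le Htree x) as [B [HB [Bx HBy]]].
      exists B. split; [auto|split; auto].
      intros y By Dy. destruct (classic (y = x)) as [E|E].
      * subst; auto.
      * apply Hno. exists y. split; auto. split; auto.
  - intros d Dd. destruct (nbhd_below T le Htree d) as [B [HB [Bd HBy]]].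
    exists B. split; [|split; [auto|]].
    + intros x Bx. exists B. auto.
    + intros y By Dy. apply Hanti; auto.
Qed.

Definition renum (k : nat) : R :=
  let '(k1, m) := Cantor.of_nat k in
  let '(a, b) := Cantor.of_nat k1 in
  IZR (Z.of_nat a - Z.of_nat b) / (INR m + 1).

Lemma renum_dense : forall u v, u < v -> exists k, u < renum k < v.
Proof.
  intros u v Huv.
  destruct (archimed_cor1 (v - u)) as [N [HN HN0]]; [lra|].
  destruct N as [|m]; [lia|].
  rewrite S_INR in HN.
  set (c := INR m + 1) in *.
  assert (Hc : 0 < c) by (unfold c; pose proof (pos_INR m); lra).
  assert (Hic : 0 < / c) by (apply Rinv_0_lt_compat; lra).
  set (p := up (u * c)).
  destruct (archimed (u * c)) as [H1 H2]. fold p in H1, H2.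
  exists (Cantor.to_nat (Cantor.to_nat (Z.to_nat p, Z.to_nat (- p)), m)).
  unfold renum. rewrite !Cantor.cancel_of_to.
  replace (Z.of_nat (Z.to_nat p) - Z.of_nat (Z.to_nat (- p)))%Z with p by lia.
  fold c.
  assert (E1 : IZR p / c - u = (IZR p - u * c) * / c) by (field; lra).
  assert (E2 : IZR p / c - (u + / c) = (IZR p - u * c - 1) * / c) by (field; lra).
  split.
  - assert (0 < (IZR p - u * c) * / c) by (apply Rmult_lt_0_compat; lra). lra.
  - assert ((IZR p - u * c - 1) * / c <= 0).
    { apply Rmult_le_0_r_reg_compat || idtac.
      assert (0 <= (1 - (IZR p - u * c)) * / c) by (apply Rmult_le_pos; lra).
      nra. }
    lra.
Qed.

Theorem corollary4p32 (T : Type) (le : T -> T -> Prop) :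
  is_tree T le -> pseudo_sup_singleton T le ->
  R_special T le -> collectionwise_Hausdorff T le ->
  perfect T le.
Proof.
  intros Htree _ [f Hf] Hcw F HF.
  pose proof Htree as [Hpo Hwo].
  pose proof Hpo as [Hrefl [Hanti Htrans]].
  assert (fmono : forall a b, le a b -> f a <= f b).
  { intros a b Hab. destruct (classic (a = b)) as [E|E].
    - subst; lra.
    - left. apply Hf. split; auto. }
  set (A := fun (q : R) (x : T) => q < f x /\ forall y, le y x -> q <= f y -> ~ F y).
  set (O := fun (q : R) (x : T) => exists B, basic_open T le B /\ B x /\
              forall y, B y -> ~ A q y).
  set (D := fun (q : R) (z : T) => F z /\ ~ O q z).
  assert (A_notF : forall q x, A q x -> ~ F x).
  { intros q x [H1 H2]. apply H2; [apply Hrefl|lra]. }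
  assert (D_pred : forall q z, D q z -> exists s, lt T le s z).
  { intros q z [Fz Oz]. apply NNPP. intro Hn. apply Oz.
    exists (fun y => y = z). split; [|split].
    - right. exists z. split; [exact Hn|]. tauto.
    - reflexivity.
    - intros y E Ay; subst y. exact (A_notF q z Ay Fz). }
  assert (D_below : forall q z s, D q z -> lt T le s z ->
            exists x, A q x /\ lt T le s x /\ lt T le x z).
  { intros q z s [Fz Oz] Hsz. apply NNPP. intro Hn. apply Oz.
    exists (fun y => lt T le s y /\ le y z). split; [|split].
    - left. exists s, z. intros; tauto.
    - split; auto.
    - intros y [Hsy Hyz] Ay. destruct (classic (y = z)) as [E|E].
      + subst y. exact (A_notF q z Ay Fz).
      + apply Hn. exists y. split; auto. split; auto. split; auto. }
  assert (D_anti : forall q a b, D q a -> D q b -> le a b -> a = b).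
  { intros q a b Da Db Hab. apply NNPP. intro Hne.
    destruct (D_below q b a Db (conj Hab Hne)) as [x [Ax [Hax _]]].
    destruct (D_pred q a Da) as [s Hs].
    destruct (D_below q a s Da Hs) as [x' [Ax' [_ Hx'a]]].
    destruct Ax as [_ Ax]. apply (Ax a (proj1 Hax)).
    - destruct Ax' as [Ax' _]. pose proof (Hf _ _ Hx'a). lra.
    - exact (proj1 Da). }
  assert (Hcd : forall q, closed_discrete T le (D q)).
  { intro q. apply antichain_cd; auto. intros a b; apply D_anti. }
  assert (HUf : exists Uf : R -> T -> T -> Prop, forall q,
    (forall d, D q d -> is_open T le (Uf q d) /\ Uf q d d) /\
    (forall d d', D q d -> D q d' -> d <> d' -> forall x, ~ (Uf q d x /\ Uf q d' x))).
  { exists (fun q => proj1_sig (constructive_indefinite_description _ (Hcw (D q) (Hcd q)))).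
    intro q. exact (proj2_sig (constructive_indefinite_description _ (Hcw (D q) (Hcd q)))). }
  destruct HUf as [Uf HUf].
  set (P := fun (d : T) (n : nat) (y : T) =>
              forall w, lt T le w d -> f w < f y + / (INR n + 1)).
  set (V := fun (q : R) (d : T) (n : nat) (x : T) =>
              exists y, lt T le y d /\ P d n y /\ lt T le y x /\ le x d /\
                (forall z, lt T le y z -> le z d -> Uf q d z)).
  set (Gq := fun (q : R) (n : nat) (x : T) => O q x \/ exists d, D q d /\ V q d n x).
  assert (Gq_open : forall q n, is_open T le (Gq q n)).
  { intros q n x [Ox | [d [Dd [y Hy]]]].
    - destruct Ox as [B [HB [Bx HBA]]]. exists B. split; [auto|split; [auto|]].
      intros y By. left. exists B. auto.
    - destruct Hy as [Hyd [HP [Hyx [Hxd HU]]]].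
      exists (fun z => lt T le y z /\ le z d). split; [|split].
      + left. exists y, d. intros; tauto.
      + auto.
      + intros z [Hyz Hzd]. right. exists d. split; auto. exists y. auto. }
  assert (Hsup : forall z s, lt T le s z -> forall eps, 0 < eps ->
            exists y, lt T le y z /\ forall w, lt T le w z -> f w < f y + eps).
  { intros z s Hsz eps Heps.
    set (E := fun r => exists w, lt T le w z /\ r = f w).
    assert (Hb : bound E).
    { exists (f z). intros r [w [Hw E1]]. subst r. left. apply Hf; auto. }
    assert (Hne : exists r, E r) by (exists (f s); exists s; auto).
    destruct (completeness E Hb Hne) as [m [Hm1 Hm2]].
    apply NNPP. intro Hn.
    assert (m <= m - eps); [|lra].
    apply Hm2. intros r [w [Hw E1]]. subst r.
    destruct (Rle_or_lt (f w) (m - eps)) as [H|H]; auto.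
    exfalso. apply Hn. exists w. split; auto.
    intros w' Hw'. assert (f w' <= m) by (apply Hm1; exists w'; auto). lra. }
  assert (F_Gq : forall q n z, F z -> Gq q n z).
  { intros q n z Fz. destruct (classic (O q z)) as [Oz|Oz]; [left; auto|].
    assert (Dz : D q z) by (split; auto).
    right. exists z. split; auto.
    destruct (proj1 (HUf q) z Dz) as [Uopen Uz].
    destruct (Uopen z Uz) as [B [HB [Bz BU]]].
    destruct HB as [[s [t HB]] | [t [Ht HB]]].
    - pose proof (proj1 (HB z) Bz) as [Hsz Hzt].
      assert (Heps : 0 < / (INR n + 1)).
      { apply Rinv_0_lt_compat. pose proof (pos_INR n). lra. }
      destruct (Hsup z s Hsz _ Heps) as [y1 [Hy1 HP1]].
      destruct (comparable' T le Htree y1 s z Hy1 Hsz) as [Hle|Hle].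
      + exists s. split; [auto|split; [|split; [auto|split; [apply Hrefl|]]]].
        * intros w Hw. pose proof (HP1 w Hw). pose proof (fmono _ _ Hle). lra.
        * intros z' Hsz' Hz'z. apply BU. apply HB. split; eauto.
      + exists y1. split; [auto|split; [exact HP1|split; [auto|split; [apply Hrefl|]]]].
        intros z' Hyz' Hz'z. apply BU. apply HB. split; [|eauto].
        apply (le_lt_trans' T le Hpo s y1 z'); auto.
    - exfalso. pose proof (proj1 (HB z) Bz). subst t.
      destruct (D_pred q z Dz) as [s Hs]. apply Ht. exists s; auto. }
  assert (notF_A : forall x, ~ F x -> exists lo, lo < f x /\
            forall q, lo < q < f x -> A q x).
  { intros x Hx. destruct (HF x Hx) as [B [HB [Bx BU]]].
    destruct HB as [[s [t HB]] | [t [Ht HB]]].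
    - pose proof (proj1 (HB x) Bx) as [Hsx Hxt].
      exists (f s). split; [apply Hf; auto|].
      intros q [Hq1 Hq2]. split; auto.
      intros y Hyx Hqy. destruct (classic (y = x)) as [E|E].
      + subst y. auto.
      + destruct (comparable' T le Htree y s x (conj Hyx E) Hsx) as [Hle|Hle].
        * pose proof (fmono _ _ Hle). lra.
        * destruct (classic (s = y)) as [E2|E2].
          -- subst y. lra.
          -- apply BU. apply HB. split; [split; auto|eauto].
    - exists (f x - 1). split; [lra|].
      intros q [Hq1 Hq2]. split; auto.
      intros y Hyx Hqy. destruct (classic (y = x)) as [E|E].
      + subst y. auto.
      + exfalso. pose proof (proj1 (HB x) Bx). subst t. apply Ht. exists y. split; auto. }
  assert (A_out : forall q x, A q x -> ~ (forall n, Gq q n x)).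
  { intros q x Ax H.
    assert (noO : ~ O q x).
    { intros [B [_ [Bx BA]]]. exact (BA x Bx Ax). }
    destruct (H 0%nat) as [Ox|[d0 [Dd0 V0]]]; [exact (noO Ox)|].
    assert (Hall : forall n, V q d0 n x).
    { intro n. destruct (H n) as [Ox|[dn [Ddn Vn]]]; [exfalso; exact (noO Ox)|].
      destruct (classic (dn = d0)) as [E|E]; [subst; auto|].
      exfalso. apply (proj2 (HUf q) dn d0 Ddn Dd0 E x). split.
      - destruct Vn as [y [_ [_ [Hyx [Hxd HU]]]]]. apply HU; auto.
      - destruct V0 as [y [_ [_ [Hyx [Hxd HU]]]]]. apply HU; auto. }
    destruct V0 as [y0 [_ [_ [_ [Hxd0 _]]]]].
    assert (Hne : x <> d0).
    { intro E; subst. exact (A_notF q d0 Ax (proj1 Dd0)). }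
    destruct (D_below q d0 x Dd0 (conj Hxd0 Hne)) as [x' [_ [Hxx' Hx'd]]].
    pose proof (Hf _ _ Hxx') as Hfx.
    destruct (archimed_cor1 (f x' - f x)) as [N [HN HN0]]; [lra|].
    destruct (Hall N) as [y [_ [HP [Hyx _]]]].
    pose proof (HP x' Hx'd). pose proof (Hf _ _ Hyx).
    assert (/ (INR N + 1) < / INR N).
    { apply Rinv_lt_contravar.
      - apply Rmult_lt_0_compat; [apply lt_0_INR; lia|]. pose proof (pos_INR N); lra.
      - lra. }
    lra. }
  exists (fun k => let '(kq, n) := Cantor.of_nat k in Gq (renum kq) n).
  split.
  - intro k. destruct (Cantor.of_nat k) as [kq n]. apply Gq_open.
  - intro x. split.
    + intros Fx k. destruct (Cantor.of_nat k) as [kq n]. apply F_Gq; auto.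
    + intros Hx. apply NNPP. intro nFx.
      destruct (notF_A x nFx) as [lo [Hlo HA]].
      destruct (renum_dense lo (f x) Hlo) as [kq Hkq].
      apply (A_out (renum kq) x (HA _ Hkq)).
      intro n. pose proof (Hx (Cantor.to_nat (kq, n))) as Hk.
      rewrite Cantor.cancel_of_to in Hk. exact Hk.
Qed.
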